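(* Let $\mathbb{E}$ be a finite-dimensional Euclidean space, $\mathcal{K}\subseteq\mathbb{E}$ a closed convex cone, $\mathcal{A}:\mathbb{E}\to\mathbb{R}^m$ a surjective linear map and $b\in\mathbb{R}^m$, and let $\mathcal{F}=\{x\in\mathcal{K}:\mathcal{A}x=b\}\neq\emptyset$. Suppose that strict feasibility fails for $\mathcal{F}$, i.e. $\mathcal{F}\cap\operatorname{relint}(\mathcal{K})=\emptyset$. Then every point of $\mathcal{F}$ is degenerate.
   Context: $\mathcal{K}^*=\{z\in\mathbb{E}:\langle z,x\rangle\ge 0\ \forall x\in\mathcal{K}\}$ is the dual cone. For $\bar x\in\mathcal{K}$, $\operatorname{face}(\bar x,\mathcal{K})$ denotes the minimal face of $\mathcal{K}$ containing $\bar x$ (the intersection of all faces of $\mathcal{K}$ containing $\bar x$). For a face $f$ of $\mathcal{K}$, its conjugate face is $f^\Delta=\{z\in\mathcal{K}^*:\langle z,x\rangle=0\ \forall x\in f\}$. A point $\bar x\in\mathcal{F}$ is called nondegenerate if $\operatorname{span}\big(\operatorname{face}(\bar x,\mathcal{K})^\Delta\big)\cap\mathcal{R}(\mathcal{A}^* )=\{0\}$, where $\mathcal{R}(\mathcal{A}^* )$ is the range of the adjoint $\mathcal{A}^*$; otherwise $\bar x$ is degenerate. *)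

(* Defs.v *)
(* The Euclidean space E is modelled as row vectors 'rV[R]_n (R : realType)
   with the standard inner product; the linear map A : E -> R^m is given by a
   matrix acting on row vectors, x |-> x *m A. *)
From HB Require Import structures.
From mathcomp Require Import all_boot all_order all_algebra.
From mathcomp Require Import all_classical all_reals topology normedtype.
Set Implicit Arguments. Unset Strict Implicit. Unset Printing Implicit Defensive.
Import Order.TTheory GRing.Theory Num.Theory.
Import numFieldNormedType.Exports.
Local Open Scope ring_scope.
Local Open Scope classical_set_scope.

Section Defs.
Variables (R : realType) (n : nat).
Notation E := 'rV[R]_n.

Definition dotE (x y : E) : R := (x *m y^T) 0 0.

Definition convex_set (S : set E) : Prop :=
  forall x y (t : R), S x -> S y -> 0 <= t -> t <= 1 -> S (t *: x + (1 - t) *: y).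

Definition cone (S : set E) : Prop :=
  forall x (t : R), S x -> 0 <= t -> S (t *: x).

Definition closed_convex_cone (K : set E) : Prop :=
  closed K /\ convex_set K /\ cone K.

Definition dual_cone (K : set E) : set E :=
  [set z | forall x, K x -> 0 <= dotE z x].

Definition aff_hull (S : set E) : set E :=
  [set v | exists (k : nat) (u : 'I_k -> E) (c : 'I_k -> R),
      (forall i, S (u i)) /\ \sum_(i < k) c i = 1 /\ v = \sum_(i < k) c i *: u i].

Definition span_set (S : set E) : set E :=
  [set v | exists (k : nat) (u : 'I_k -> E) (c : 'I_k -> R),
      (forall i, S (u i)) /\ v = \sum_(i < k) c i *: u i].

Definition relint (S : set E) : set E :=
  [set x | S x /\ exists e : R, 0 < e /\
      forall y, aff_hull S y -> dotE (y - x) (y - x) < e ^+ 2 -> S y].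

Definition is_face (f K : set E) : Prop :=
  f `<=` K /\ convex_set f /\
  forall x y (t : R), K x -> K y -> 0 < t -> t < 1 ->
    f (t *: x + (1 - t) *: y) -> f x /\ f y.

Definition min_face (xb : E) (K : set E) : set E :=
  [set z | forall f, is_face f K -> f xb -> f z].

Definition conj_face (f K : set E) : set E :=
  [set z | dual_cone K z /\ forall x, f x -> dotE z x = 0].

End Defs.

(* range of the adjoint A^* : R^m -> E of x |-> x *m A, i.e. y |-> y *m A^T *)
Definition range_adj (R : realType) (n m : nat) (A : 'M[R]_(n, m)) : set 'rV[R]_n :=
  [set z | exists y : 'rV[R]_m, z = y *m A^T].

Definition feasible_set (R : realType) (n m : nat) (K : set 'rV[R]_n)
  (A : 'M[R]_(n, m)) (b : 'rV[R]_m) : set 'rV[R]_n :=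
  [set x | K x /\ x *m A = b].

Definition nondegenerate (R : realType) (n m : nat) (K : set 'rV[R]_n)
  (A : 'M[R]_(n, m)) (xb : 'rV[R]_n) : Prop :=
  span_set (conj_face (min_face xb K) K) `&` range_adj A = [set 0].

Definition degenerate (R : realType) (n m : nat) (K : set 'rV[R]_n)
  (A : 'M[R]_(n, m)) (xb : 'rV[R]_n) : Prop :=
  ~ nondegenerate K A xb.

(* Main.v *)
Require Import Defs.
From HB Require Import structures.
From mathcomp Require Import all_boot all_order all_algebra.
From mathcomp Require Import all_classical all_reals topology normedtype.
From mathcomp Require Import ring lra zify derive.
Set Implicit Arguments. Unset Strict Implicit. Unset Printing Implicit Defensive.
Import Order.TTheory GRing.Theory Num.Theory.
Import numFieldNormedType.Exports.
Local Open Scope ring_scope.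
Local Open Scope classical_set_scope.

Section Dot.
Variable R : realType.

Lemma dotE_sum n (x y : 'rV[R]_n) : dotE x y = \sum_j x 0 j * y 0 j.
Proof. by rewrite /dotE !mxE; apply: eq_bigr => j _; rewrite mxE. Qed.

Lemma dotEC n (x y : 'rV[R]_n) : dotE x y = dotE y x.
Proof. by rewrite !dotE_sum; apply: eq_bigr => j _; rewrite mulrC. Qed.

Lemma dotEDl n (x y z : 'rV[R]_n) : dotE (x + y) z = dotE x z + dotE y z.
Proof. by rewrite !dotE_sum -big_split; apply: eq_bigr => j _; rewrite mxE mulrDl. Qed.

Lemma dotEZl n a (x z : 'rV[R]_n) : dotE (a *: x) z = a * dotE x z.
Proof. by rewrite !dotE_sum mulr_sumr; apply: eq_bigr => j _; rewrite mxE mulrA. Qed.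

Lemma dotENl n (x z : 'rV[R]_n) : dotE (- x) z = - dotE x z.
Proof. by rewrite -scaleN1r dotEZl mulN1r. Qed.

Lemma dotEBl n (x y z : 'rV[R]_n) : dotE (x - y) z = dotE x z - dotE y z.
Proof. by rewrite dotEDl dotENl. Qed.

Lemma dotEDr n (x y z : 'rV[R]_n) : dotE z (x + y) = dotE z x + dotE z y.
Proof. by rewrite dotEC dotEDl !(dotEC z). Qed.

Lemma dotEZr n a (x z : 'rV[R]_n) : dotE z (a *: x) = a * dotE z x.
Proof. by rewrite dotEC dotEZl dotEC. Qed.

Lemma dotENr n (x z : 'rV[R]_n) : dotE z (- x) = - dotE z x.
Proof. by rewrite dotEC dotENl dotEC. Qed.

Lemma dotEBr n (x y z : 'rV[R]_n) : dotE z (x - y) = dotE z x - dotE z y.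
Proof. by rewrite dotEDr dotENr. Qed.

Lemma dotE0l n (z : 'rV[R]_n) : dotE 0 z = 0.
Proof. by rewrite dotE_sum big1 // => j _; rewrite mxE mul0r. Qed.

Lemma dotE0r n (z : 'rV[R]_n) : dotE z 0 = 0.
Proof. by rewrite dotEC dotE0l. Qed.

Lemma dotE_ge0 n (x : 'rV[R]_n) : 0 <= dotE x x.
Proof. by rewrite dotE_sum sumr_ge0 // => j _; rewrite -expr2 sqr_ge0. Qed.

Lemma dotE_eq0 n (x : 'rV[R]_n) : dotE x x = 0 -> x = 0.
Proof.
rewrite dotE_sum => /eqP; rewrite psumr_eq0 => [/allP H|j _]; last by rewrite -expr2 sqr_ge0.
apply/rowP => j; rewrite mxE; have := H j (mem_index_enum _).
by rewrite /= -expr2 sqrf_eq0 => /eqP.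
Qed.

Lemma dotE_coord n (x : 'rV[R]_n) j : x 0 j ^+ 2 <= dotE x x.
Proof.
rewrite dotE_sum (bigD1 j) //= expr2 lerDl sumr_ge0 // => i _.
by rewrite -expr2 sqr_ge0.
Qed.

Lemma dotE_mul n m (y : 'rV[R]_m) (M : 'M[R]_(n, m)) (x : 'rV[R]_n) :
  dotE (y *m M^T) x = dotE y (x *m M).
Proof. by rewrite /dotE trmx_mul mulmxA. Qed.

End Dot.
Section Final.
Variable R : realType.

Lemma face_exposed n (K : set 'rV[R]_n) (z : 'rV[R]_n) :
  convex_set K -> dual_cone K z -> is_face [set x | K x /\ dotE z x = 0] K.
Proof.
move=> cK dz; split; first by move=> x [].
split.
  move=> x y t [Kx zx] [Ky zy] t0 t1; split; first exact: cK.
  by rewrite dotEDr !dotEZr zx zy !mulr0 addr0.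
move=> x y t Kx Ky t0 t1 [_ h].
have hx := dz _ Kx; have hy := dz _ Ky.
move: h; rewrite dotEDr !dotEZr => h.
have ha : t * dotE z x = 0 by nra.
have hb : (1 - t) * dotE z y = 0 by nra.
split; split => //.
  by move/eqP: ha; rewrite mulf_eq0 gt_eqF //= => /eqP.
by move/eqP: hb; rewrite mulf_eq0 subr_eq0 gt_eqF //= => /eqP.
Qed.

Lemma final_step n m (K : set 'rV[R]_n) (A : 'M[R]_(n, m)) xb (y : 'rV[R]_m) :
  convex_set K -> y *m A^T != 0 -> dual_cone K (y *m A^T) ->
  dotE (y *m A^T) xb = 0 -> K xb -> degenerate K A xb.
Proof.
move=> cK nz dz zx Kxb; rewrite /degenerate /nondegenerate => H.
have : (span_set (conj_face (min_face xb K) K) `&` range_adj A) (y *m A^T).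
  split; last by exists y.
  exists 1%N, (fun _ => y *m A^T), (fun _ => 1); split.
    move=> _; split => // x mx.
    have := mx _ (face_exposed cK dz) (conj Kxb zx).
    by case.
  by rewrite big_ord1 scale1r.
by rewrite H => /= /eqP; rewrite (negbTE nz).
Qed.
End Final.
Section Span.
Variables (R : realType) (n : nat).
Implicit Types (K : set 'rV[R]_n).

Lemma rank_col_mx_lt k (U : 'M[R]_(k, n)) (v : 'rV[R]_n) :
  ~~ (v <= U)%MS -> (\rank U < \rank (col_mx U v))%N.
Proof.
move=> nv; apply: rank_ltmx; rewrite ltmxE; apply/andP; split.
  by rewrite -addsmxE addsmxSl.
apply: contra nv => h; apply: submx_trans h.
by rewrite -addsmxE addsmxSr.
Qed.

Lemma span_ex_aux K d : forall k (U : 'M[R]_(k, n)), (n - \rank U <= d)%N ->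
  (forall i, K (row i U)) ->
  exists k' (U' : 'M[R]_(k', n)), (forall i, K (row i U')) /\
    forall v, K v -> (v <= U')%MS.
Proof.
elim: d => [|d IH] k U hd hK.
  have [H|H] := pselect (forall v, K v -> (v <= U)%MS); first by exists k, U.
  exfalso; move/existsNP: H => [v /not_implyP [Kv /negP nv]].
  have := rank_col_mx_lt nv; have := rank_leq_col (col_mx U v).
  move: hd; rewrite leqn0 subn_eq0 => hd h1 h2.
  by have := leq_ltn_trans hd h2; rewrite ltnNge h1.
have [H|H] := pselect (forall v, K v -> (v <= U)%MS); first by exists k, U.
move/existsNP: H => [v /not_implyP [Kv /negP nv]].
apply: (IH _ (col_mx U v)).
  have := rank_col_mx_lt nv; have := rank_leq_col (col_mx U v).
  move: hd; set a := \rank U; set b := \rank (col_mx U v) => hd h1 h2.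
  rewrite leq_subLR; rewrite leq_subLR in hd.
  lia.
move=> i; rewrite -(fintype.splitK i); case: (fintype.split i) => j /=.
  by rewrite rowKu.
rewrite rowKd; have -> : row j v = v by apply/rowP => l; rewrite !mxE (ord1 j).
exact: Kv.
Qed.

Lemma span_ex K : exists k (U : 'M[R]_(k, n)), (forall i, K (row i U)) /\
    forall v, K v -> (v <= U)%MS.
Proof.
apply: (@span_ex_aux K n 0 (0 : 'M_(0, n))); first exact: leq_subr.
by case.
Qed.

End Span.
Section Relint.
Variables (R : realType) (n : nat) (K : set 'rV[R]_n).
Hypotheses (cK : convex_set K) (coK : cone K) (K0 : K 0).

Lemma Kadd x y : K x -> K y -> K (x + y).
Proof.
move=> Kx Ky.
have h : K ((2:R)^-1 *: x + (1 - (2:R)^-1) *: y).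
  apply: cK => //; rewrite ?invr_ge0 ?ler0n //.
  by rewrite invf_le1 ?ler1n // ltr0n.
have := coK h (ler0n _ 2).
rewrite scalerDr !scalerA mulfV ?pnatr_eq0 //.
have -> : (2:R) * (1 - 2^-1) = 1 by field.
by rewrite !scale1r.
Qed.

Lemma Kcomb k (U : 'M[R]_(k, n)) (c : 'rV[R]_k) :
  (forall i, K (row i U)) -> (forall i, 0 <= c 0 i) -> K (c *m U).
Proof.
move=> KU c0; rewrite mulmx_sum_row.
apply: (big_ind K) => //; first exact: Kadd.
by move=> i _; apply: coK.
Qed.

Lemma abs_lt_of_sq (a e : R) : 0 < e -> a ^+ 2 < e ^+ 2 -> `|a| < e.
Proof.
move=> e0 h; rewrite ltNge; apply/negP => ea.
have : e ^+ 2 <= `|a| ^+ 2 by rewrite ler_pXn2r // ?nnegrE ?normr_ge0 // ltW.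
by rewrite real_normK ?num_real // leNgt h.
Qed.

Lemma coef_bound k (P : 'M[R]_(n, k)) (d : 'rV[R]_n) (e : R) i :
  0 < e -> dotE d d < e ^+ 2 ->
  `|(d *m P) 0 i| <= e * \sum_i' \sum_j `|P j i'|.
Proof.
move=> e0 hd; rewrite mxE.
apply: le_trans (ler_norm_sum _ _ _) _.
apply: (@le_trans _ _ (e * \sum_j `|P j i|)).
  rewrite mulr_sumr; apply: ler_sum => j _; rewrite normrM ler_wpM2r //.
  by apply: ltW; apply: abs_lt_of_sq => //; apply: le_lt_trans (dotE_coord _ _) hd.
rewrite ler_wpM2l ?(ltW e0) // [X in _ <= X](bigD1 i) //= lerDl sumr_ge0 // => i' _.
by rewrite sumr_ge0 // => j _.
Qed.

Lemma aff_sub k (U : 'M[R]_(k, n)) y :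
  (forall v, K v -> (v <= U)%MS) -> aff_hull K y -> (y <= U)%MS.
Proof.
move=> hU [l [u [c [Ku [_ ->]]]]].
by apply: summx_sub => i _; apply: scalemx_sub; apply: hU.
Qed.

Lemma relint_of k (U : 'M[R]_(k, n)) (a : R) (x : 'rV[R]_n) :
  (forall i, K (row i U)) -> (forall v, K v -> (v <= U)%MS) ->
  0 < a -> K x -> relint K (a *: (const_mx 1 *m U) + x).
Proof.
move=> KU hU a0 Kx.
have Kc : forall c : 'rV[R]_k, (forall i, 0 <= c 0 i) -> K (c *m U).
  by move=> c; apply: Kcomb.
split.
  apply: Kadd => //; rewrite scalemxAl; apply: Kc => i.
  by rewrite !mxE mulr1 ltW.
set S := \sum_i' \sum_j `|(pinvmx U) j i'|.
have S0 : 0 <= S by rewrite sumr_ge0 // => i _; rewrite sumr_ge0.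
exists (a / (1 + S)); split; first by rewrite divr_gt0 // ltr_pwDl.
move=> y hy hd.
set z := a *: (const_mx 1 *m U) + x in hd *.
have dU : (y - z <= U)%MS.
  rewrite addmx_sub ?eqmx_opp //; first exact: aff_sub hy.
  rewrite addmx_sub //; last exact: hU.
  by rewrite scalemx_sub // submxMl.
have ey : y = x + (a *: const_mx 1 + (y - z) *m pinvmx U) *m U.
  rewrite mulmxDl mulmxKpV // -scalemxAl /z; set w := a *: _.
  by rewrite (addrCA w y) opprD addrA -addrA (addrA w) subrr add0r addrCA subrr addr0.
rewrite ey; apply: Kadd => //; apply: Kc => i; rewrite !mxE mulr1.
have hb := coef_bound (pinvmx U) i (divr_gt0 a0 (ltr_pwDl ltr01 S0)) hd.
rewrite -/S in hb.
have : a / (1 + S) * S < a.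
  rewrite mulrAC ltr_pdivrMr ?ltr_pwDl // ltr_pM2l //.
  by rewrite ltrDr ltr01.
move: hb; rewrite ler_norml => /andP [h1 _] h2.
rewrite mxE in h1; lra.
Qed.

End Relint.
Section Sep.
Variables (R : realType) (m : nat).
Implicit Types (G : set 'rV[R]_m).

Lemma cont_sum (T : topologicalType) (I : Type) (r : seq I) (F : I -> T -> R) :
  (forall i, continuous (F i)) -> continuous (fun x => \sum_(i <- r) F i x).
Proof.
move=> h x; elim: r => [|a r IH].
  have -> : (fun x => \sum_(i <- [::]) F i x) = (fun _ => 0).
    by apply: funext => y; rewrite big_nil.
  exact: cvg_cst.
have -> : (fun x => \sum_(i <- a :: r) F i x) =
  (fun x => F a x + \sum_(i <- r) F i x).
  by apply: funext => y; rewrite big_cons.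
exact: (cvgD (h a x) IH).
Qed.

Lemma closure_stable G (h : 'rV[R]_m -> 'rV[R]_m) :
  continuous h -> (forall x, G x -> G (h x)) ->
  forall c, closure G c -> closure G (h c).
Proof.
move=> ch hG.
have cl : closed (h @^-1` closure G).
  by apply: preimage_closed; [move=> x _; exact: ch | exact: closed_closure].
have : closure G `<=` h @^-1` closure G.
  rewrite [X in _ `<=` X](closure_id _).1 //; apply: closureS.
  by move=> x Gx; apply: subset_closure; apply: hG.
by move=> H c Gc; exact: H.
Qed.

Lemma lim_arg (a b : R) : 0 <= b ->
  (forall s, 0 < s -> s <= 1 -> 0 <= a + s * b) -> 0 <= a.
Proof.
move=> b0 H; rewrite leNgt; apply/negP => a0.
have d0 : 0 < b + 1 - a by lra.
set s := - a / (b + 1 - a).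
have s0 : 0 < s by rewrite /s divr_gt0 // oppr_gt0.
have s1 : s <= 1 by rewrite /s ler_pdivrMr // mul1r; lra.
have hs : s * (b + 1 - a) = - a by rewrite /s mulfVK // gt_eqF.
have := H s s0 s1; nra.
Qed.

Lemma separation G (p : 'rV[R]_m) :
  G 0 -> (forall x y, G x -> G y -> G (x + y)) ->
  (forall a x, 0 <= a -> G x -> G (a *: x)) -> ~ closure G p ->
  exists y, (forall g, G g -> 0 <= dotE y g) /\ dotE y p < 0.
Proof.
move=> G0 Gadd Gsc npG.
pose f := fun x : 'rV[R]_m => dotE (x - p) (x - p).
have fE : f = fun x => \sum_j (x 0 j - p 0 j) * (x 0 j - p 0 j).
  by apply: funext => x; rewrite /f dotE_sum; apply: eq_bigr => j _; rewrite !mxE.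
have fc : continuous f.
  rewrite fE; apply: cont_sum => j x.
  have hj : (fun M : 'rV[R]_m => M 0 j - p 0 j) @ x --> x 0 j - p 0 j.
    exact: (cvgB (@coord_continuous R 1 m 0 j x) (cvg_cst _)).
  exact: (cvgM hj hj).
pose A := closure G `&` [set x | f x <= f 0].
have A0 : A !=set0 by exists 0; split; [exact: (@subset_closure _ G 0 G0) | exact: lexx].
have Acl : closed A.
  apply: closedI; first exact: closed_closure.
  by apply: (preimage_closed (f := f) (D := [set r | r <= f 0])) => // x _; exact: fc.
have Ab : [bounded x | x in A].
  pose B := \sum_j `|p 0 j| + 1 + f 0.
  have f00 : 0 <= f 0 by rewrite /f dotE_ge0.
  have hB : forall x, A x -> `|x| <= B.
    move=> x [_ hx]; rewrite [leLHS]/Num.norm /= mx_normrE; apply: bigmax_le.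
      by rewrite /B addr_ge0 ?addr_ge0 ?sumr_ge0.
    move=> [i j] _ /=; rewrite (ord1 i).
    have h1 : (x 0 j - p 0 j) ^+ 2 <= f 0.
      apply: le_trans hx; rewrite /f.
      by have := dotE_coord (x - p) j; rewrite !mxE.
    have h2 : `|x 0 j - p 0 j| <= 1 + f 0.
      rewrite -real_normK ?num_real // in h1.
      have := normr_ge0 (x 0 j - p 0 j); nra.
    have h3 : `|p 0 j| <= \sum_j `|p 0 j|.
      by rewrite (bigD1 j) //= lerDl sumr_ge0.
    have := ler_normD (x 0 j - p 0 j) (p 0 j); rewrite subrK.
    rewrite /B; lra.
  rewrite /bounded_near; near=> M => t At /=.
  apply: le_trans (hB t At) _.
  near: M; apply: nbhs_pinfty_ge; exact: num_real.
have [c cA cmin] := EVT_min_rV A0 (bounded_closed_compact Ab Acl)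
  (continuous_subspaceT fc).
move: cA; rewrite inE => -[Gc fc0].
have cmin' : forall t, closure G t -> f c <= f t.
  move=> t Gt; have [ft|ft] := lerP (f t) (f 0).
    by apply: cmin; rewrite inE.
  by apply: le_trans fc0 (ltW ft).
have [y yE] : exists y, y = c - p by exists (c - p).
have fcE : f c = dotE y y by rewrite /f yE.
have fy : forall v, f (c + v) = dotE y y + 2 * dotE y v + dotE v v.
  move=> v; rewrite /f (_ : c + v - p = y + v); last by rewrite yE addrAC.
  by rewrite dotEDl !dotEDr (dotEC v y); lra.
have cont_add : forall g, continuous (fun x : 'rV[R]_m => x + g).
  move=> g x; exact: (cvgD (@cvg_id _ (nbhs x)) (cvg_cst g)).
exists y; split.
  move=> g Gg; apply: (lim_arg (dotE_ge0 g)) => s s0 s1.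
  have Gs : closure G (c + s *: g).
    apply: (closure_stable (cont_add (s *: g))) => // x Gx.
    by apply: Gadd => //; apply: Gsc => //; apply: ltW.
  have := cmin' _ Gs; rewrite fy fcE dotEZr !dotEZl dotEZr => h.
  have : 0 <= s * (2 * dotE y g + s * dotE g g) by nra.
  have := dotE_ge0 g; rewrite pmulr_rge0 //; nra.
have yc1 : 0 <= dotE y c.
  apply: (lim_arg (dotE_ge0 c)) => s s0 s1.
  have Gs : closure G (c + s *: c).
    have -> : c + s *: c = (1 + s) *: c by rewrite scalerDl scale1r.
    apply: (@closure_stable G (fun x => (1 + s) *: x)) => //.
      by move=> x; exact: scaler_continuous.
    move=> x Gx.
    by apply: Gsc => //; lra.
  have := cmin' _ Gs; rewrite fy fcE dotEZr !dotEZl dotEZr => h.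
  have : 0 <= s * (2 * dotE y c + s * dotE c c) by nra.
  have := dotE_ge0 c; rewrite pmulr_rge0 //; nra.
have yc2 : 0 <= - dotE y c.
  apply: (lim_arg (dotE_ge0 c)) => s s0 s1.
  have Gs : closure G (c + (- s) *: c).
    have -> : c + (- s) *: c = (1 - s) *: c by rewrite scalerDl scale1r.
    apply: (@closure_stable G (fun x => (1 - s) *: x)) => //.
      by move=> x; exact: scaler_continuous.
    move=> x Gx.
    by apply: Gsc => //; lra.
  have := cmin' _ Gs; rewrite fy fcE dotEZr !dotEZl dotEZr => h.
  have : 0 <= s * (2 * - dotE y c + s * dotE c c) by nra.
  have := dotE_ge0 c; rewrite pmulr_rge0 //; nra.
have yp : dotE y p = dotE y c - dotE y y.
  by rewrite {4}yE dotEBr; lra.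
have ny : y != 0.
  apply/eqP => y0; apply: npG; move/eqP: y0; rewrite yE subr_eq0 => /eqP <-.
  exact: Gc.
have : 0 < dotE y y.
  rewrite lt_def dotE_ge0 andbT; apply/eqP => h; move/eqP: ny; apply.
  exact: dotE_eq0.
rewrite yp; lra.
Unshelve. all: by end_near.
Qed.

End Sep.

Lemma nzAT (R : realType) n m (A : 'M[R]_(n, m)) (y : 'rV[R]_m) :
  (forall y : 'rV[R]_m, exists x : 'rV[R]_n, x *m A = y) ->
  y != 0 -> y *m A^T != 0.
Proof.
move=> surj ny; have [x xA] := surj y.
apply/eqP => h.
have : dotE (y *m A^T) x = dotE y y by rewrite dotE_mul xA.
rewrite h dotE0l => /esym /dotE_eq0 y0.
by move/eqP: ny; apply.
Qed.

Theorem theorem3p1 (R : realType) (n m : nat) (K : set 'rV[R]_n)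
  (A : 'M[R]_(n, m)) (b : 'rV[R]_m) :
  closed_convex_cone K ->
  (forall y : 'rV[R]_m, exists x : 'rV[R]_n, x *m A = y) ->
  feasible_set K A b !=set0 ->
  feasible_set K A b `&` relint K = set0 ->
  forall xb, feasible_set K A b xb -> degenerate K A xb.
Proof.
move=> [_ [cK coK]] surj [x0 [Kx0 Ax0]] noint xb [Kxb Axb].
have K0 : K 0 by have := coK x0 0 Kx0 (lexx 0); rewrite scale0r.
suff [y [ny [dy yx]]] : exists y : 'rV[R]_m, y != 0 /\
    dual_cone K (y *m A^T) /\ dotE (y *m A^T) xb = 0.
  exact: (final_step cK (nzAT surj ny) dy yx Kxb).
have [k [U [KU hU]]] := span_ex K.
have [/row_fullP [Cm hCm]|nrf] := boolP (row_full (U *m A)); last first.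
  pose M := (U *m A)^T.
  have rk : (0 < \rank (kermx M))%N.
    rewrite mxrank_ker mxrank_tr subn_gt0.
    by move: nrf; rewrite /row_full ltn_neqAle rank_leq_col andbT.
  have [i ni] : exists i, row i (kermx M) != 0.
    apply: contrapT => H; move: rk; rewrite lt0n => /negP; apply.
    have -> : kermx M = 0.
      apply/row_matrixP => i; rewrite row0; apply/eqP.
      by apply: contrapT => h; apply: H; exists i; apply/negP.
    by rewrite mxrank0.
  pose y := row i (kermx M).
  have yM : y *m M = 0 by rewrite /y -row_mul mulmx_ker row0.
  have z0 : forall v, K v -> dotE (y *m A^T) v = 0.
    move=> v Kv; rewrite dotE_mul -(mulmxKpV (hU v Kv)) -(mulmxA _ U A).
    by rewrite /dotE trmx_mul mulmxA -/M yM mul0mx mxE.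
  exists y; split => //; split; last exact: z0.
  by move=> v Kv; rewrite z0.
pose G := [set g | exists x t, K x /\ g = x *m A - t *: b].
have G0 : G 0 by exists 0, 0; split => //; rewrite mul0mx scale0r subr0.
have Gadd : forall x y, G x -> G y -> G (x + y).
  move=> _ _ [x1 [t1 [Kx1 ->]]] [x2 [t2 [Kx2 ->]]].
  exists (x1 + x2), (t1 + t2); split; first exact: Kadd.
  by rewrite mulmxDl scalerDl opprD addrACA.
have Gsc : forall a x, 0 <= a -> G x -> G (a *: x).
  move=> a _ a0 [x1 [t1 [Kx1 ->]]].
  exists (a *: x1), (a * t1); split; first exact: coK.
  by rewrite scalerBr -scalemxAl scalerA.
pose xs : 'rV[R]_n := const_mx 1 *m U.
pose p := - (xs *m A).
have [cl|ncl] := pselect (closure G p); last first.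
  have [y [yG yp]] := separation G0 Gadd Gsc ncl.
  have ny : y != 0 by apply: contraTneq yp => ->; rewrite dotE0l ltxx.
  have yKA : forall x, K x -> 0 <= dotE y (x *m A).
    by move=> x Kx; apply: yG; exists x, 0; rewrite scale0r subr0.
  have yb1 : 0 <= dotE y b.
    by apply: yG; exists 0, (-1); rewrite mul0mx scaleN1r opprK add0r.
  have yb2 : 0 <= dotE y (- b).
    by apply: yG; exists 0, 1; rewrite mul0mx scale1r add0r.
  exists y; split => //; split.
    by move=> x Kx; rewrite dotE_mul; apply: yKA.
  by rewrite dotE_mul Axb; move: yb2; rewrite dotENr; lra.
exfalso.
set S := \sum_i' \sum_j `|Cm j i'|.
have S0 : 0 <= S by rewrite sumr_ge0 // => i _; rewrite sumr_ge0.
set eta := (2 * (1 + S))^-1.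
have eta0 : 0 < eta by rewrite invr_gt0 mulr_gt0 // ltr_pwDl.
have [g [[x1 [t [Kx1 gE]]] bg]] := cl _ (nbhsx_ballx p eta eta0).
set d := p - g.
have dcoef : forall i, `|(d *m Cm) 0 i| <= 2^-1.
  move=> i; rewrite mxE; apply: le_trans (ler_norm_sum _ _ _) _.
  apply: (@le_trans _ _ (eta * \sum_j `|Cm j i|)).
    rewrite mulr_sumr; apply: ler_sum => j _; rewrite normrM ler_wpM2r //.
    move: bg => [_ /(_ 0 j)]; rewrite /ball /= /d !mxE => h.
    by apply: ltW.
  apply: (@le_trans _ _ (eta * S)).
    rewrite ler_wpM2l ?(ltW eta0) // [X in _ <= X](bigD1 i) //= lerDl sumr_ge0 //.
    by move=> i' _; rewrite sumr_ge0.
  have h : eta * (2 * (1 + S)) = 1.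
    by rewrite /eta mulVf // mulf_neq0 // gt_eqF // ltr_pwDl.
  nra.
have dA : d *m Cm *m U *m A = d by rewrite -(mulmxA _ U A) -(mulmxA d Cm) hCm mulmx1.
pose k1 := (2^-1 *: const_mx 1 + d *m Cm) *m U + x1.
have Kk1 : K k1.
  apply: Kadd => //; apply: Kcomb => // i.
  rewrite !mxE mulr1; have := dcoef i; rewrite ler_norml mxE => /andP [h _]; lra.
have k1A : k1 *m A = 2^-1 *: (xs *m A) - xs *m A + t *: b.
  rewrite /k1 mulmxDl (mulmxDl _ _ U) (mulmxDl _ _ A) dA -!scalemxAl /d gE /p -/xs.
  by apply/rowP => j; rewrite !mxE; lra.
set u := (`|t| + 1)^-1.
have t1 : 0 < `|t| + 1 by have := normr_ge0 t; lra.
have u0 : 0 < u by rewrite /u invr_gt0.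
have hu : u * (`|t| + 1) = 1 by rewrite /u mulVf // gt_eqF.
set s0 := `|t| - t + 1.
have s00 : 0 <= s0 by rewrite /s0; have := ler_norm t; lra.
pose xk := u *: (k1 + s0 *: x0).
have Kxk : K xk.
  apply: (coK); last exact: ltW.
  apply: Kadd => //; apply: coK => //.
pose fin := (u / 2) *: xs + xk.
have rfin : relint K fin.
  by apply: relint_of => //; rewrite divr_gt0.
have finA : fin *m A = b.
  rewrite /fin /xk mulmxDl -!scalemxAl mulmxDl -scalemxAl k1A Ax0.
  apply/rowP => j; rewrite !mxE.
  have e : u * (t + s0) = 1 by rewrite /s0 -hu; congr (_ * _); lra.
  have := congr1 (fun r => r * b 0 j) e; rewrite mul1r => e'.
  lra.
have : (feasible_set K A b `&` relint K) fin.
  split => //; split => //; exact: rfin.1.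
by rewrite noint.
Qed.
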